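(* Let $S$ be an $E$-solid locally inverse semigroup and $\rho$ an inverse semigroup congruence on $S$ such that every idempotent $\rho$-class is a completely simple subsemigroup of $S$; put $T=S/\rho$. For every $\alpha,\beta\in T$ with $\alpha\ge\beta$ (natural partial order of $T$) and every $s\in\alpha$ (viewing $\alpha$ as a $\rho$-class), there exists a unique $t\in\beta$ such that $s\ge t$ in the natural partial order of $S$.
   Context: A semigroup is locally inverse if it is regular and every local submonoid $eSe$ ($e$ idempotent) is inverse; $E$-solid means the subsemigroup generated by the idempotents is completely regular. The natural partial order on a regular semigroup: $s\le t$ iff $s=et=tf$ for some idempotents $e,f$. *)

(* Defs.v *)
Section SG.
Variable S : Type.
Variable mul : S -> S -> S.

Definition associative_op : Prop :=
  forall x y z, mul x (mul y z) = mul (mul x y) z.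

Definition idem (e : S) : Prop := mul e e = e.

Definition nat_le (s t : S) : Prop :=
  exists e f, idem e /\ idem f /\ s = mul e t /\ s = mul t f.

Definition regular : Prop :=
  forall x, exists y, mul (mul x y) x = x.

Definition subsemigroup (A : S -> Prop) : Prop :=
  forall x y, A x -> A y -> A (mul x y).

Definition inverse_sub (A : S -> Prop) : Prop :=
  forall x, A x -> exists y, (A y /\ mul (mul x y) x = x /\ mul (mul y x) y = y) /\
     forall y', A y' -> mul (mul x y') x = x -> mul (mul y' x) y' = y' -> y' = y.

Definition local_submonoid (e : S) : S -> Prop :=
  fun x => exists s, x = mul (mul e s) e.

Definition locally_inverse : Prop :=
  regular /\ forall e, idem e -> inverse_sub (local_submonoid e).

Inductive gen_idem : S -> Prop :=
  | gen_idem_base : forall e, idem e -> gen_idem e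
  | gen_idem_mul : forall x y, gen_idem x -> gen_idem y -> gen_idem (mul x y).

Definition subgroup (G : S -> Prop) : Prop :=
  subsemigroup G /\
  exists u, G u /\ (forall g, G g -> mul u g = g /\ mul g u = g) /\
    (forall g, G g -> exists h, G h /\ mul g h = u /\ mul h g = u).

Definition completely_regular_sub (A : S -> Prop) : Prop :=
  forall x, A x -> exists G, subgroup G /\ (forall g, G g -> A g) /\ G x.

Definition E_solid : Prop := completely_regular_sub gen_idem.

Definition ideal_of (C I : S -> Prop) : Prop :=
  (forall x, I x -> C x) /\ (exists x, I x) /\
  (forall c x, C c -> I x -> I (mul c x) /\ I (mul x c)).

Definition simple_sub (C : S -> Prop) : Prop :=
  forall I, ideal_of C I -> forall x, C x -> I x.

Definition primitive_idem_in (C : S -> Prop) (e : S) : Prop :=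
  C e /\ idem e /\
  forall f, C f -> idem f -> f = mul e f -> f = mul f e -> f = e.

Definition completely_simple_sub (C : S -> Prop) : Prop :=
  subsemigroup C /\ simple_sub C /\ exists e, primitive_idem_in C e.

Definition congruence (rho : S -> S -> Prop) : Prop :=
  (forall x, rho x x) /\ (forall x y, rho x y -> rho y x) /\
  (forall x y z, rho x y -> rho y z -> rho x z) /\
  (forall x y z, rho x y -> rho (mul z x) (mul z y) /\ rho (mul x z) (mul y z)).

(* S/rho is an inverse semigroup, stated on representatives:
   every class [x] has a unique inverse class *)
Definition inverse_congruence (rho : S -> S -> Prop) : Prop :=
  congruence rho /\
  forall x, exists y, (rho (mul (mul x y) x) x /\ rho (mul (mul y x) y) y) /\
    forall y', rho (mul (mul x y') x) x -> rho (mul (mul y' x) y') y' -> rho y' y.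

(* natural partial order on S/rho on representatives: [b] <= [a] iff
   [b] = [e][a] = [a][f] with [e], [f] idempotents of S/rho *)
Definition quot_le (rho : S -> S -> Prop) (b a : S) : Prop :=
  exists e f, rho (mul e e) e /\ rho (mul f f) f /\
    rho b (mul e a) /\ rho b (mul a f).

End SG.
Arguments associative_op {S}. Arguments locally_inverse {S}. Arguments E_solid {S}. Arguments inverse_congruence {S}. Arguments completely_simple_sub {S}. Arguments quot_le {S}. Arguments nat_le {S}.

(* Main.v *)
Require Import Defs.
From Stdlib Require Import Setoid Morphisms.

Ltac ra H t := match goal with |- ?R ?x ?y => transitivity t;
  [ assert (x = t) as -> by (rewrite ?H; reflexivity); reflexivity | ] end.

Lemma comm_idem (S : Type) (mul : S -> S -> S) (Hassoc : associative_op mul)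
  (R : S -> S -> Prop) (HR : Equivalence R) (Hp : Proper (R ==> R ==> R) mul)
  (A : S -> Prop) (HA : forall x y, A x -> A y -> A (mul x y))
  (Hinv : forall x, A x -> exists y, (A y /\ R (mul (mul x y) x) x /\ R (mul (mul y x) y) y) /\
     forall y', A y' -> R (mul (mul x y') x) x -> R (mul (mul y' x) y') y' -> R y' y)
  (e f : S) (Ae : A e) (Af : A f) (He : R (mul e e) e) (Hf : R (mul f f) f) :
  R (mul (mul e f) (mul e f)) (mul e f) /\ R (mul e f) (mul f e).
Proof.
  assert (selfinv : forall x y, A x -> R (mul (mul x y) x) x -> R (mul (mul y x) y) y -> A y ->
     forall z, A z -> R (mul (mul x z) x) x -> R (mul (mul z x) z) z -> R y z).
  { intros x y Ax H1 H2 Ay z Az H3 H4. destruct (Hinv x Ax) as [w [_ Hu]].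
    transitivity w. now apply Hu. symmetry; now apply Hu. }
  assert (ID : forall u v, A u -> A v -> R (mul u u) u -> R (mul v v) v ->
     R (mul (mul u v) (mul u v)) (mul u v)).
  { intros u v Au Av Hu Hv.
    destruct (Hinv (mul u v) (HA _ _ Au Av)) as [x [[Ax [H1 H2]] Hx]].
    assert (Hfxe : R (mul (mul v x) u) x).
    { apply Hx. apply HA; auto.
      - ra Hassoc (mul (mul (mul (mul u (mul v v)) x) (mul u u)) v).
        rewrite Hu, Hv. ra Hassoc (mul (mul (mul u v) x) (mul u v)). exact H1.
      - ra Hassoc (mul (mul (mul (mul v x) (mul u u)) (mul v v)) (mul x u)).
        rewrite Hu, Hv. ra Hassoc (mul (mul v (mul (mul x (mul u v)) x)) u).
        rewrite H2. reflexivity. }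
    assert (Hxx : R (mul x x) x).
    { transitivity (mul (mul (mul v x) u) (mul (mul v x) u)).
      apply Hp; symmetry; exact Hfxe.
      ra Hassoc (mul (mul v (mul (mul x (mul u v)) x)) u). rewrite H2. exact Hfxe. }
    assert (E : R (mul u v) x).
    { apply (selfinv x); auto. rewrite !Hxx; reflexivity. rewrite !Hxx; reflexivity. }
    rewrite E. exact Hxx. }
  split. apply ID; auto.
  assert (Hfe := ID f e Af Ae Hf He).
  assert (Hef := ID e f Ae Af He Hf).
  apply (selfinv (mul e f)); auto.
  - rewrite Hef. rewrite Hef. reflexivity.
  - rewrite Hef. rewrite Hef. reflexivity.
  - first [ ra Hassoc (mul (mul (mul e (mul f f)) (mul e e)) f); rewrite Hf, He;
    ra Hassoc (mul (mul e f) (mul e f)); exact Hef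
  | ra Hassoc (mul (mul (mul f (mul e e)) (mul f f)) e); rewrite Hf, He;
    ra Hassoc (mul (mul f e) (mul f e)); exact Hfe ].
  - first [ ra Hassoc (mul (mul (mul e (mul f f)) (mul e e)) f); rewrite Hf, He;
    ra Hassoc (mul (mul e f) (mul e f)); exact Hef
  | ra Hassoc (mul (mul (mul f (mul e e)) (mul f f)) e); rewrite Hf, He;
    ra Hassoc (mul (mul f e) (mul f e)); exact Hfe ].
Qed.

Lemma prim (S : Type) (mul : S -> S -> S) (Hassoc : associative_op mul)
  (C : S -> Prop) (Hcs : completely_simple_sub mul C) (f g : S) :
  C f -> C g -> mul f f = f -> mul g g = g -> g = mul f g -> g = mul g f -> g = f.
Proof.
  intros Cf Cg If Ig Hfg Hgf.
  destruct Hcs as [Hsub [Hsim [e0 [Ce0 [Ie0 Hpr]]]]].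
  idtac.
  assert (Hf : exists u v, C u /\ C v /\ f = mul (mul u e0) v).
  { apply (Hsim (fun x => exists u v, C u /\ C v /\ x = mul (mul u e0) v)); auto.
    split; [|split].
    - intros x [u [v [Cu [Cv ->]]]]. auto.
    - exists e0, e0, e0. rewrite !Ie0. auto.
    - intros c x Cc [u [v [Cu [Cv ->]]]]. split.
      + exists (mul c u), v. rewrite !Hassoc. auto.
      + exists u, (mul v c). rewrite !Hassoc. auto. }
  destruct Hf as [u [v [Cu [Cv Hf]]]].
  set (u' := mul (mul f u) e0). set (v' := mul (mul e0 v) f).
  assert (Huv : f = mul u' v').
  { unfold u', v'. rewrite !Hassoc. rewrite <- (Hassoc (mul f u) e0 e0), Ie0.
    rewrite <- (Hassoc f u e0), <- (Hassoc f (mul u e0) v), <- Hf, If, If. reflexivity. }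
  assert (Cu' : C u') by (unfold u'; auto).
  assert (Cv' : C v') by (unfold v'; auto).
  assert (Hw : mul (mul v' g) u' = e0).
  { apply Hpr; auto. unfold idem.
    - rewrite !Hassoc. rewrite <- (Hassoc (mul v' g) u' v'), <- Huv.
      rewrite <- (Hassoc v' g f), <- Hgf. rewrite <- (Hassoc v' g g), Ig. reflexivity.
    - unfold v'. rewrite !Hassoc. rewrite Ie0. reflexivity.
    - unfold u'. rewrite !Hassoc. rewrite <- (Hassoc _ e0 e0), Ie0. reflexivity. }
  assert (E : mul u' v' = mul (mul u' e0) v').
  { unfold u'. rewrite <- (Hassoc (mul f u) e0 e0), Ie0. reflexivity. }
  rewrite Huv, E, <- Hw. rewrite !Hassoc.
  rewrite <- (Hassoc (mul (mul u' v') g) u' v'), <- Huv. rewrite <- Hfg, <- Hgf. reflexivity.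
Qed.

Theorem lemma4p1 (S : Type) (mul : S -> S -> S)
  (Hassoc : associative_op mul)
  (Hli : locally_inverse mul) (Hes : E_solid mul)
  (rho : S -> S -> Prop) (Hrho : inverse_congruence mul rho)
  (Hcs : forall a, rho (mul a a) a -> completely_simple_sub mul (rho a)) :
  forall a b : S, quot_le mul rho b a ->
  forall s, rho s a ->
  exists t, (rho t b /\ nat_le mul t s) /\
    forall t', rho t' b -> nat_le mul t' s -> t' = t.
Proof.
  intros a b [e [f [He [Hf [Hb1 Hb2]]]]] s Hs.
  destruct Hli as [Hreg Hloc].
  destruct Hrho as [[Hrf [Hsy [Htr Hcp]]] Hinvc].
  assert (HR : Equivalence rho) by (split; [exact Hrf | exact Hsy | exact Htr]).
  assert (Hp : Proper (rho ==> rho ==> rho) mul).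
  { intros x x' Hx y y' Hy. transitivity (mul x' y).
    apply Hcp; exact Hx. apply Hcp; exact Hy. }
  destruct (Hreg s) as [s' Hss].
  assert (lift3 : forall u v w z, mul (mul u v) w = z -> forall x, mul (mul (mul x u) v) w = mul x z).
  { intros u v w z H x. rewrite <- H. rewrite !Hassoc. reflexivity. }
  assert (Ip : mul (mul s s') (mul s s') = mul s s').
  { rewrite Hassoc, Hss. reflexivity. }
  assert (HM : forall x y, local_submonoid S mul (mul s s') x -> local_submonoid S mul (mul s s') y ->
     local_submonoid S mul (mul s s') (mul x y)).
  { intros x y [u ->] [v ->]. exists (mul (mul (mul u (mul s s')) (mul s s')) v).
    rewrite !Hassoc. reflexivity. }
  assert (Mp : forall x, local_submonoid S mul (mul s s') x -> mul (mul s s') x = x /\ mul x (mul s s') = x).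
  { intros x [u ->]. split.
    - rewrite (Hassoc (mul s s') (mul (mul s s') u) (mul s s')), (Hassoc (mul s s') (mul s s') u), Ip. reflexivity.
    - rewrite <- Hassoc, Ip. reflexivity. }
  assert (HinvM := Hloc (mul s s') Ip).
  assert (CT := comm_idem S mul Hassoc rho HR Hp (fun _ => True) (fun _ _ _ _ => I)).
  assert (CT' : forall u v, rho (mul u u) u -> rho (mul v v) v ->
     rho (mul (mul u v) (mul u v)) (mul u v) /\ rho (mul u v) (mul v u)).
  { intros u v Hu Hv. apply CT; auto. intros x _. destruct (Hinvc x) as [y [Hy1 Hy2]].
    exists y. split; auto. }
  assert (Hpr : rho (mul (mul s s') (mul s s')) (mul s s')) by (rewrite Ip; reflexivity).
  assert (CM := comm_idem S mul Hassoc eq _ _ (local_submonoid S mul (mul s s')) HM HinvM).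
  assert (KK : forall t, nat_le mul t s ->
     mul (mul (mul (mul s s') t) s') s = t /\
     mul (mul (mul (mul s s') t) s') (mul (mul (mul s s') t) s') = mul (mul (mul s s') t) s' /\
     local_submonoid S mul (mul s s') (mul (mul (mul s s') t) s')).
  { intros t [e1 [f1 [Ie1 [If1 [H1 H2]]]]].
    assert (B : mul (mul t s') s = t).
    { rewrite H1 at 1. rewrite <- Hassoc, <- Hassoc, (Hassoc s s' s), Hss. symmetry; exact H1. }
    assert (A : mul (mul t s') t = t).
    { rewrite H2 at 2. rewrite Hassoc, B. rewrite H2 at 1. rewrite <- Hassoc.
      unfold idem in If1. rewrite If1. symmetry; exact H2. }
    assert (Bp : mul (mul t s') (mul s s') = mul t s').
    { rewrite Hassoc, B. reflexivity. }
    split; [|split].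
    - rewrite (lift3 _ _ _ _ B). rewrite H2, Hassoc, Hss. reflexivity.
    - rewrite !Hassoc. rewrite (lift3 _ _ _ _ B). rewrite (lift3 _ _ _ _ A). reflexivity.
    - exists (mul (mul (mul s s') t) s'). assert (Bp' := Bp). rewrite <- !Hassoc in Bp'.
      rewrite <- !Hassoc. rewrite Bp'. rewrite !Hassoc, Hss. reflexivity. }
  assert (UNI : forall t1 t2, rho t1 b -> rho t2 b -> nat_le mul t1 s -> nat_le mul t2 s -> t1 = t2).
  { intros t1 t2 R1 R2 N1 N2.
    destruct (KK t1 N1) as [K1s [K1i K1M]].
    destruct (KK t2 N2) as [K2s [K2i K2M]].
    set (k1 := mul (mul (mul s s') t1) s') in *.
    set (k2 := mul (mul (mul s s') t2) s') in *.
    assert (R12 : rho k1 k2).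
    { unfold k1, k2. apply Hp; [|reflexivity]. apply Hp; [reflexivity|]. rewrite R1, R2; reflexivity. }
    destruct (CM k1 k2 K1M K2M K1i K2i) as [Ci Cc].
    assert (Cs := Hcs k1 ltac:(rewrite K1i; reflexivity)).
    assert (E1 : mul k1 k2 = k1).
    { apply (prim S mul Hassoc (rho k1) Cs).
      - reflexivity.
      - rewrite <- K1i at 1. apply Hp; [reflexivity|exact R12].
      - exact K1i.
      - exact Ci.
      - rewrite Hassoc, K1i. reflexivity.
      - rewrite <- Hassoc, <- Cc, Hassoc, K1i. reflexivity. }
    assert (E2 : mul k1 k2 = k2).
    { rewrite Cc. apply (prim S mul Hassoc (rho k1) Cs).
      - exact R12.
      - rewrite <- K1i at 1. rewrite <- Cc. apply Hp; [reflexivity|exact R12].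
      - exact K2i.
      - rewrite <- Cc. exact Ci.
      - rewrite Hassoc, K2i. reflexivity.
      - rewrite <- Cc, <- Hassoc, K2i. reflexivity. }
    rewrite <- K1s, <- K2s. rewrite <- E1, E2. reflexivity. }
  assert (Mx : local_submonoid S mul (mul s s') (mul (mul (mul s s') e) (mul s s'))) by (exists e; reflexivity).
  destruct (HinvM _ Mx) as [y [[My [Hxyx Hyxy]] _]].
  set (x := mul (mul (mul s s') e) (mul s s')) in *.
  destruct (CT' e (mul s s') He Hpr) as [Hqq Hcomm].
  set (q := mul e (mul s s')) in *.
  assert (Hxq : rho x q).
  { unfold x. rewrite <- Hcomm. unfold q. rewrite <- Hassoc, Ip. reflexivity. }
  assert (Hyq : rho y q).
  { destruct (Hinvc q) as [z [_ Hz]].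
    transitivity z.
    - apply Hz; [rewrite <- Hxq; rewrite Hxyx; reflexivity | rewrite <- Hxq; rewrite Hyxy; reflexivity].
    - symmetry. apply Hz; rewrite !Hqq; reflexivity. }
  destruct (Mp (mul x y) (HM _ _ Mx My)) as [Hph Hhp].
  assert (Hhh : mul (mul x y) (mul x y) = mul x y) by (rewrite Hassoc, Hxyx; reflexivity).
  assert (Htb : rho (mul (mul x y) s) b).
  { rewrite Hxq, Hyq, Hqq. unfold q. rewrite <- Hassoc, Hss. rewrite Hs. symmetry; exact Hb1. }
  set (h := mul x y) in *.
  assert (Hnl : nat_le mul (mul h s) s).
  { exists h, (mul (mul s' h) s). split; [|split; [|split]].
    + exact Hhh.
    + unfold idem. rewrite !Hassoc. rewrite <- (Hassoc (mul s' h) s s').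
      rewrite <- (Hassoc s' h (mul s s')), Hhp. rewrite <- (Hassoc s' h h), Hhh. reflexivity.
    + reflexivity.
    + rewrite (Hassoc s), (Hassoc s s'), Hph. reflexivity. }
  exists (mul h s). split; [split|]; auto.
Qed.
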